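(* Let $p\neq q$ be primes and $n$ a positive integer. Suppose $T$ is a numerical semigroup which is cyclotomic of depth $p^nq$ and height $1$. Then $T=\langle p^n,q\rangle$.
   Context: A numerical semigroup is a submonoid $T$ of $(\mathbb N,+)$ with $\mathbb N\setminus T$ finite; $\langle a,b\rangle$ denotes the submonoid generated by $a,b$. $\mathrm P_T(x)=(1-x)\sum_{t\in T}x^t$. $T$ is cyclotomic if $\mathrm P_T$ has all complex roots in the closed unit disc. $T$ is cyclotomic of depth $d$ and height $h$ if $\mathrm P_T(x)\mid (x^d-1)^h$ with $d,h$ chosen minimally, that is, $\mathrm P_T(x)$ does not divide $(x^m-1)^{h-1}$ for any $m$, and does not divide $(x^{d'}-1)^h$ for any divisor $d'<d$ of $d$. *)

(* Defs.v *)
From mathcomp Require Import all_boot all_order all_algebra.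
Set Implicit Arguments. Unset Strict Implicit. Unset Printing Implicit Defensive.
Import GRing.Theory.
Local Open Scope ring_scope.

Definition numerical_semigroup (T : pred nat) : Prop :=
  T 0%N /\ (forall a b, T a -> T b -> T (a + b)%N) /\
  exists N : nat, forall k, (N <= k)%N -> T k.

(* P is the polynomial P_T(x) = (1 - x) * sum_{t in T} x^t, i.e. its
   coefficient of x^k is [k in T] - [k-1 in T] (with the second term 0 for k=0). *)
Definition is_PT (T : pred nat) (P : {poly int}) : Prop :=
  forall k : nat, P`_k = (T k)%:Z - ((0 < k)%N && T k.-1)%:Z.

Definition cyclotomic_depth_height (T : pred nat) (d h : nat) : Prop :=
  (0 < d)%N /\ (0 < h)%N /\
  exists P : {poly int}, is_PT T P /\
    P %| ('X^d - 1) ^+ h /\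
    (forall m : nat, (0 < m)%N -> ~~ (P %| ('X^m - 1) ^+ h.-1)) /\
    (forall d' : nat, (0 < d')%N -> (d' %| d)%N -> (d' < d)%N ->
        ~~ (P %| ('X^d' - 1) ^+ h)).

Definition in_gen2 (a b t : nat) : Prop := exists i j : nat, t = (i * a + j * b)%N.

(* Main.v *)
Require Import Defs.
From mathcomp Require Import all_boot all_order all_algebra.
From mathcomp Require Import all_field.
From mathcomp Require Import ring zify.
Set Implicit Arguments. Unset Strict Implicit. Unset Printing Implicit Defensive.
Import GRing.Theory Num.Theory.
Local Open Scope ring_scope.


Lemma fact_L (F : fieldType) (s : seq nat) (G : nat -> {poly F}) (p : {poly F}) :
  separable_poly (\prod_(e <- s) G e) -> p %| \prod_(e <- s) G e ->
  (forall e, e \in s -> (G e %| p) || coprimep (G e) p) ->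
  (forall e, e \in s -> (1 < size (G e))%N) ->
  p %= \prod_(e <- s | G e %| p) G e.
Proof.
elim: s p => [|e s IH] p.
  by rewrite !big_nil => _ p1 _ _; rewrite /eqp p1 dvd1p.
rewrite !big_cons separable_mul => /and3P[_ sepR coR] pdv hdc hsz.
have Ge0 : G e != 0.
  by rewrite -size_poly_gt0 (ltn_trans _ (hsz e _)) // mem_head.
have hdc' : forall e', e' \in s -> (G e' %| p) || coprimep (G e') p.
  by move=> e' he'; apply: hdc; rewrite inE he' orbT.
have hsz' : forall e', e' \in s -> (1 < size (G e'))%N.
  by move=> e' he'; apply: hsz; rewrite inE he' orbT.
have coe : forall e', e' \in s -> coprimep (G e') (G e).
  move=> e' he'; rewrite coprimep_sym; apply: coprimep_dvdl coR.
  by rewrite (big_rem e') //= ?dvdp_mulIr ?dvdp_mulIl.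
case: ifP => Gep; last first.
  have : coprimep (G e) p by have := hdc e (mem_head _ _); rewrite Gep.
  move=> cop; apply: IH => //.
  by rewrite -(Gauss_dvdpr _ (_ : coprimep p (G e))) // coprimep_sym.
have pE : p = (p %/ G e) * G e by rewrite divpK.
set p' := p %/ G e in pE.
have p'dv : p' %| p by rewrite [X in _ %| X]pE; exact: dvdp_mulIl.
have eqf : forall e', e' \in s -> (G e' %| p) = (G e' %| p').
  move=> e' he'; apply/idP/idP => [h|h]; last exact: dvdp_trans h p'dv.
  by move: h; rewrite pE Gauss_dvdpl // coe.
have IH' : p' %= \prod_(e' <- s | G e' %| p') G e'.
  apply: IH => //.
  - by move: pdv; rewrite pE mulrC dvdp_mul2l //.
  - move=> e' he'; case/orP: (hdc' e' he') => [h|h].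
      by rewrite -eqf // h.
    by rewrite (coprimep_dvdl p'dv h) orbT.
rewrite [X in _ %= X](_ : _ = G e * \prod_(e' <- s | G e' %| p') G e').
  by rewrite {1}pE mulrC eqp_mul2l.
congr (_ * _); rewrite big_seq_cond [RHS]big_seq_cond; apply: eq_bigl => e'.
by case he': (e' \in s) => //=; rewrite eqf.
Qed.


Notation pZtoC := (map_poly (intr : int -> algC)).
Definition Ph (e : nat) : {poly algC} := pZtoC 'Phi_e.

Lemma totient_mulp (e p : nat) : prime p -> (0 < e)%N -> (p %| e)%N ->
  totient (e * p) = (totient e * p)%N.
Proof.
move=> pp e0 pe; have [m cpm eE] := pfactor_coprime pp e0.
set k := logn p e in eE.
have k0 : (0 < k)%N.
  case: k eE => [|k'] // eE; rewrite eE expn0 muln1 in pe.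
  by rewrite prime_coprime // pe in cpm.
have cm : forall j, coprime m (p ^ j) by move=> j; apply: coprimeXr; rewrite coprime_sym.
rewrite eE -mulnA -expnSr !totient_coprime // !totient_pfactor //.
by rewrite -(prednK k0) /= expnSr !mulnA.
Qed.

Lemma Ph_monic e : Ph e \is monic.
Proof.
rewrite monicE /Ph lead_coef_map_inj ?(monicP (Cyclotomic_monic e)) ?rmorph1 //.
exact: intr_inj.
Qed.

Lemma Ph_size e : size (Ph e) = (totient e).+1.
Proof. by rewrite /Ph size_map_inj_poly ?size_Cyclotomic //; apply: intr_inj. Qed.

Lemma Ph_prim e z : e.-primitive_root z -> Ph e = cyclotomic z e.
Proof. exact: Cintr_Cyclotomic. Qed.

Lemma Ph_root e z : (0 < e)%N -> root (Ph e) z = e.-primitive_root z.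
Proof.
move=> e0; have [z0 pz0] := C_prim_root_exists e0.
by rewrite (Ph_prim pz0) root_cyclotomic.
Qed.

Lemma pZtoC_QC (G : {poly int}) :
  pZtoC G = map_poly (ratr : rat -> algC) (map_poly (intr : int -> rat) G).
Proof.
rewrite -map_poly_comp; apply: eq_map_poly => b /=; by rewrite rmorph_int.
Qed.

Lemma Ph_dvd (G : {poly int}) e z :
  e.-primitive_root z -> root (pZtoC G) z -> Ph e %| pZtoC G.
Proof.
move=> pz; rewrite (Ph_prim pz) -(minCpoly_cyclotomic pz).
have [pf [Dpf _] dv] := minCpolyP z.
by rewrite Dpf pZtoC_QC dvdp_map -dv.
Qed.

Lemma Ph_dvd_or_coprime (G : {poly int}) e : (0 < e)%N ->
  (Ph e %| pZtoC G) || coprimep (Ph e) (pZtoC G).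
Proof.
move=> e0; case: (boolP (coprimep _ _)) => [|nc]; first by rewrite orbT.
rewrite orbF; move: nc; rewrite coprimep_def => /closed_rootP[z].
rewrite root_gcd => /andP[r1 r2].
by apply: (Ph_dvd (z:=z)) => //; rewrite -Ph_root.
Qed.

Lemma prod_Ph d : (0 < d)%N -> \prod_(e <- divisors d) Ph e = 'X^d - 1.
Proof.
move=> d0; rewrite /Ph -rmorph_prod prod_Cyclotomic //.
by rewrite rmorphB rmorph1 /= map_polyXn.
Qed.

Lemma Ph_comp e p : prime p -> (0 < e)%N -> (p %| e)%N ->
  Ph (e * p) = Ph e \Po 'X^p.
Proof.
move=> pp e0 pe.
have ep0 : (0 < e * p)%N by rewrite muln_gt0 e0 prime_gt0.
have mon2 : Ph e \Po 'X^p \is monic.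
  rewrite monicE lead_coef_comp ?size_polyXn ?ltnS ?prime_gt0 //.
  by rewrite lead_coefXn expr1n mulr1 -monicE Ph_monic.
apply/eqP; rewrite -eqp_monic ?Ph_monic // -dvdp_size_eqp.
  rewrite (polySpred (monic_neq0 mon2)) size_comp_poly !Ph_size size_polyXn.
  by rewrite /= totient_mulp.
have [z pz] := C_prim_root_exists ep0.
rewrite -[X in _ %| X](_ : pZtoC ('Phi_e \Po 'X^p) = _); last first.
  by rewrite map_comp_poly map_polyXn.
apply: (Ph_dvd pz); rewrite map_comp_poly map_polyXn /root horner_comp hornerXn.
have : e.-primitive_root (z ^+ p).
  have := exp_prim_root pz p.
  by rewrite (gcdn_idPl (dvdn_mull _ (dvdnn _))) mulnK // prime_gt0.
by rewrite -(Ph_root _ e0) /Ph.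
Qed.


Lemma dvd_pnq p q n e : prime p -> prime q -> p != q -> (e %| p ^ n * q)%N ->
  (exists2 i, (i <= n)%N & e = (p ^ i)%N) \/ (exists2 i, (i <= n)%N & e = (p ^ i * q)%N).
Proof.
move=> pp pq npq hd.
case: (boolP (q %| e)%N) => qe; last first.
  left; have cq : coprime e q by rewrite coprime_sym prime_coprime.
  by move: hd; rewrite Gauss_dvdl // => /(@dvdn_pfactor p _ _ pp).
right; move: hd; rewrite -(divnK qe) dvdn_pmul2r ?prime_gt0 //.
by case/(@dvdn_pfactor p _ _ pp) => i hi ->; exists i.
Qed.

Lemma divisors_prime l : prime l -> perm_eq (divisors l) [:: 1%N; l].
Proof.
move=> pl; apply: uniq_perm; first exact: divisors_uniq.
  by rewrite /= inE andbT; have := prime_gt1 pl; case: l {pl} => [|[|l]].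
move=> e; rewrite -dvdn_divisors ?prime_gt0 // !inE.
apply/idP/idP => [he|/orP[]/eqP->]; rewrite ?dvd1n ?dvdnn //.
have := he; rewrite -(expn1 l) => /(@dvdn_pfactor l _ _ pl)[i].
by case: i => [|[|i]] //= _ ->; rewrite ?eqxx ?orbT.
Qed.

Lemma divisors_pq p q : prime p -> prime q -> p != q ->
  perm_eq (divisors (p * q)) [:: 1%N; p; q; (p * q)%N].
Proof.
move=> pp pq npq; have p1 := prime_gt1 pp; have q1 := prime_gt1 pq.
apply: uniq_perm; first exact: divisors_uniq.
  rewrite /= !inE !negb_or npq !andbT; apply/and3P; split.
  - apply/and3P; split; apply/eqP; nia.
  - apply/eqP; nia.
  - apply/eqP; nia.
move=> e; rewrite -dvdn_divisors ?muln_gt0 ?prime_gt0 // !inE.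
apply/idP/idP => [he|].
  have := @dvd_pnq p q 1 e pp pq npq; rewrite expn1 => /(_ he).
  case=> -[[|[|i]] // _ ->]; rewrite ?expn0 ?expn1 ?mul1n ?muln1;
  by do ?[apply/orP; (left; exact/eqP) || right]; exact/eqP.
case/or4P => /eqP->; [exact: dvd1n | exact: dvdn_mulr (dvdnn _) | exact: dvdn_mull (dvdnn _) | exact: dvdnn].
Qed.

Lemma Ph1 : Ph 1 = 'X - 1.
Proof.
have := prod_Ph (ltn0Sn 0); have -> : divisors 1 = [:: 1%N] by [].
by rewrite big_seq1 expr1.
Qed.

Lemma Ph_prime l : prime l -> ('X - 1) * Ph l = 'X^l - 1.
Proof.
move=> pl; rewrite -prod_Ph ?prime_gt0 // (perm_big _ (divisors_prime pl)).
  by rewrite !big_cons big_nil /= Ph1 mulr1.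
Qed.

Lemma geom_poly (a n : nat) :
  ('X^a - 1) * \sum_(i < n) 'X^(i * a) = 'X^(a * n) - 1 :> {poly algC}.
Proof.
elim: n => [|n IH]; first by rewrite big_ord0 mulr0 muln0 expr0 subrr.
rewrite big_ord_recr /= mulrDr IH mulnS exprD (mulnC n a); ring.
Qed.

Lemma Ph_prime1 l : prime l -> (Ph l).[1] = l%:R.
Proof.
move=> pl.
have : ('X - 1) * Ph l = ('X - 1) * \sum_(i < l) 'X^(i * 1).
  rewrite Ph_prime // (_ : 'X - 1 = 'X^1 - 1); last by rewrite expr1.
  by rewrite geom_poly mul1n.
move/mulfI => ->; last by rewrite -[1]polyC1 polyXsubC_eq0.
rewrite horner_sum.
under eq_bigr do rewrite hornerXn expr1n.
by rewrite sumr_const card_ord.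
Qed.

Lemma Ph_comp_pow e p i : prime p -> (0 < e)%N -> (p %| e)%N ->
  Ph (e * p ^ i)%N = Ph e \Po 'X^(p ^ i)%N.
Proof.
move=> pp e0 pe; elim: i => [|i IH]; first by rewrite muln1 expn0 expr1 comp_polyXr.
rewrite expnSr mulnA Ph_comp //; last by rewrite dvdn_mulr.
  by rewrite IH -comp_polyA comp_Xn_poly -exprM mulnC.
by rewrite muln_gt0 e0 expn_gt0 prime_gt0.
Qed.

Lemma Ph_ppow1 l k : prime l -> (Ph (l ^ k.+1)%N).[1] = l%:R.
Proof.
move=> pl; rewrite expnS Ph_comp_pow ?prime_gt0 //.
by rewrite horner_comp hornerXn expr1n Ph_prime1.
Qed.

Lemma Ph_pq p q : prime p -> prime q -> p != q ->
  Ph (p * q) * ('X^p - 1) * ('X^q - 1) = ('X - 1) * ('X^(p * q) - 1).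
Proof.
move=> pp pq npq.
have pq0 : (0 < p * q)%N by rewrite muln_gt0 !prime_gt0.
rewrite -(prod_Ph pq0) (perm_big _ (divisors_pq pp pq npq)).
rewrite !big_cons big_nil /= -Ph_prime // -Ph_prime // Ph1; ring.
Qed.


Lemma pZtoC_monic (P : {poly int}) : P \is monic -> pZtoC P \is monic.
Proof.
move=> mP; rewrite monicE lead_coef_map_inj ?(monicP mP) ?rmorph1 //.
exact: intr_inj.
Qed.

Lemma pZtoC_XnB1 m : pZtoC ('X^m - 1) = 'X^m - 1.
Proof. by rewrite rmorphB rmorph1 /= map_polyXn. Qed.

Lemma E1 d (P : {poly int}) : (0 < d)%N -> P \is monic -> P %| 'X^d - 1 ->
  pZtoC P = \prod_(e <- divisors d | Ph e %| pZtoC P) Ph e.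
Proof.
move=> d0 mP hdv.
have dvC : pZtoC P %| \prod_(e <- divisors d) Ph e.
  rewrite prod_Ph //; case/(Pdiv.IdomainMonic.dvdpP mP): hdv => Q EQ.
  by rewrite -pZtoC_XnB1 EQ rmorphM dvdp_mull.
have H1 : forall e, e \in divisors d -> (Ph e %| pZtoC P) || coprimep (Ph e) (pZtoC P).
  by move=> e; rewrite -dvdn_divisors // => /dvdn_gt0 => /(_ d0) e0; exact: Ph_dvd_or_coprime.
have H2 : forall e, e \in divisors d -> (1 < size (Ph e))%N.
  move=> e; rewrite -dvdn_divisors // => /dvdn_gt0 => /(_ d0) e0.
  by rewrite Ph_size ltnS totient_gt0.
have sep : separable_poly (\prod_(e <- divisors d) Ph e).
  by rewrite prod_Ph // separable_Xn_sub_1 // pnatr_eq0 -lt0n.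
have heq := fact_L sep dvC H1 H2.
have m1 := pZtoC_monic mP.
have m2 : \prod_(e <- divisors d | Ph e %| pZtoC P) Ph e \is monic.
  by apply: monic_prod => e _; exact: Ph_monic.
by apply/eqP; rewrite -(eqp_monic m1 m2).
Qed.

Lemma Ph_horner1 e : (Ph e).[1] = (('Phi_e).[1])%:~R :> algC.
Proof. by rewrite -[1 in LHS](rmorph1 (intr : int -> algC)) horner_map. Qed.

Lemma E2 p q n (P : {poly int}) : prime p -> prime q -> p != q ->
  P.[1] = 1 ->
  pZtoC P = \prod_(e <- divisors (p ^ n * q) | Ph e %| pZtoC P) Ph e ->
  forall e, e \in divisors (p ^ n * q) -> Ph e %| pZtoC P ->
  exists2 i, (0 < i <= n)%N & e = (p ^ i * q)%N.
Proof.
move=> pp pq npq P1 hE e he hR.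
have hprod : \prod_(f <- divisors (p ^ n * q) | Ph f %| pZtoC P) ('Phi_f).[1] = 1.
  apply: (@intr_inj algC); rewrite rmorph_prod rmorph1 /=.
  have HC : (pZtoC P).[1] = 1.
    by rewrite -[1 in LHS](rmorph1 (intr : int -> algC)) horner_map P1 rmorph1.
  have hE' := congr1 (fun r => r.[1]) hE; rewrite /= horner_prod in hE'.
  rewrite -[RHS]HC hE'; apply: eq_bigr => f _.
  by rewrite Ph_horner1.
rewrite big_mkcond (bigD1_seq e) //= ?divisors_uniq // hR in hprod.
move: hprod; set r := \prod_(_ <- _ | _) _ => hprod. clearbody r.
have bad : forall l k, prime l -> e = (l ^ k.+1)%N -> False.
  move=> l k pl el; have := Ph_ppow1 k pl; rewrite -el Ph_horner1 => H.
  have El : ('Phi_e).[1] = l%:Z by apply: (@intr_inj algC); rewrite H.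
  rewrite El in hprod; have := prime_gt1 pl; clear -hprod.
  move/(congr1 absz): hprod; rewrite abszM absz_nat /= => /eqP.
  by rewrite muln_eq1 => /andP[/eqP ->].
have hd : (e %| p ^ n * q)%N by rewrite dvdn_divisors // muln_gt0 expn_gt0 !prime_gt0.
case: (dvd_pnq pp pq npq hd) => -[i hi ei].
  case: i hi ei => [|k] hi ei; last by exfalso; exact: (bad p k pp ei).
  have : (Ph e).[1] = 0 by rewrite ei expn0 Ph1 !hornerE subrr.
  rewrite Ph_horner1 => /eqP; rewrite intr_eq0 => /eqP E0.
  by rewrite E0 mul0r in hprod.
case: i hi ei => [|k] hi ei; last by exists k.+1.
by exfalso; apply: (bad q 0%N) => //; rewrite ei expn0 mul1n expn1.
Qed.


Lemma comp_prod (I : Type) (s : seq I) (Pr : pred I) (F : I -> {poly algC}) r :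
  \prod_(i <- s | Pr i) (F i \Po r) = (\prod_(i <- s | Pr i) F i) \Po r.
Proof.
elim: s => [|x s IH]; first by rewrite !big_nil -polyC1 comp_polyC.
by rewrite !big_cons; case: (Pr x); rewrite IH // comp_polyM.
Qed.

Lemma iotaS m k : iota m k.+1 = iota m k ++ [:: (m + k)%N].
Proof. by rewrite -addn1 iotaD. Qed.

Lemma XnB1_comp m a : ('X^m - 1) \Po 'X^a = 'X^(a * m) - 1 :> {poly algC}.
Proof. by rewrite comp_polyB comp_Xn_poly -polyC1 comp_polyC polyC1 exprM. Qed.

Lemma A_id p q j : prime p -> prime q -> p != q ->
  (\prod_(i <- iota 1 j) Ph (p ^ i * q)%N) * ('X^(p ^ j)%N - 1) * ('X^q - 1)
  = ('X - 1) * ('X^(p ^ j * q)%N - 1).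
Proof.
move=> pp pq npq; elim: j => [|j IH].
  by rewrite big_nil mul1r expn0 mul1n expr1.
set a := (p ^ j)%N in IH *.
have hPh : Ph (p ^ j.+1 * q)%N = Ph (p * q) \Po 'X^a.
  rewrite -Ph_comp_pow ?muln_gt0 ?prime_gt0 ?dvdn_mulr //.
  by congr Ph; rewrite /a expnS; ring.
have hpq := congr1 (fun r => r \Po 'X^a) (Ph_pq pp pq npq).
rewrite /= !comp_polyM !XnB1_comp comp_polyB comp_polyX -polyC1 comp_polyC polyC1 in hpq.
rewrite -hPh in hpq.
have nz : ('X^(a * q)%N - 1 : {poly algC}) != 0.
  by rewrite -size_poly_gt0 size_XnsubC // muln_gt0 expn_gt0 !prime_gt0.
apply: (mulIf nz).
rewrite (_ : iota 1 j.+1 = iota 1 j ++ [:: j.+1]); last by rewrite iotaS add1n.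
rewrite big_cat /= big_seq1.
have e1 : (p ^ j.+1)%N = (a * p)%N by rewrite /a expnS mulnC.
have e2 : (p ^ j.+1 * q)%N = (a * (p * q))%N by rewrite e1 mulnA.
rewrite e2 e1; rewrite e2 in hpq.
transitivity ((\prod_(i <- iota 1 j) Ph (p ^ i * q)%N) * ('X^q - 1)
   * (Ph (a * (p * q))%N * ('X^(a * p)%N - 1) * ('X^(a * q)%N - 1))).
  by ring.
rewrite hpq.
transitivity ((\prod_(i <- iota 1 j) Ph (p ^ i * q)%N) * ('X^a - 1) * ('X^q - 1)
   * ('X^(a * (p * q))%N - 1)).
  by ring.
by rewrite IH; ring.
Qed.


Lemma decomp p q n (P : {poly int}) : prime p -> prime q -> p != q -> (0 < n)%N ->
  P \is monic -> P.[1] = 1 -> P %| 'X^(p ^ n * q)%N - 1 ->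
  exists j, exists C : {poly algC}, (j <= n)%N /\
    pZtoC P * ('X^q - 1) =
    ('X - 1) * ((\sum_(i < q) 'X^(i * p ^ j)%N) * (C \Po 'X^(p ^ j.+1)%N)).
Proof.
move=> pp pq npq n0 mP P1 hdv.
have p1 := prime_gt1 pp; have q1 := prime_gt1 pq.
set d := (p ^ n * q)%N in hdv.
have d0 : (0 < d)%N by rewrite muln_gt0 expn_gt0 !prime_gt0.
have hE := E1 d0 mP hdv.
have hin := E2 pp pq npq P1 hE.
set PC := pZtoC P in hE hin *.
pose R i := Ph (p ^ i * q)%N %| PC.
pose f i := (p ^ i * q)%N.
have finj : injective f.
  move=> x y; rewrite /f => /eqP; rewrite eqn_pmul2r ?prime_gt0 //.
  by move/eqP/expnI; apply.
have hE3 : PC = \prod_(i <- iota 1 n | R i) Ph (f i).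
  rewrite {1}hE -big_filter -[RHS]big_filter -(big_map f xpredT Ph).
  apply: perm_big; apply: uniq_perm.
  - by rewrite filter_uniq // divisors_uniq.
  - by rewrite (map_inj_uniq finj) filter_uniq // iota_uniq.
  move=> e; rewrite mem_filter; apply/idP/mapP.
    case/andP => hR he; have [i hi ei] := hin e he hR.
    subst e; exists i => //; rewrite mem_filter mem_iota /R hR /=.
    by case/andP: hi => -> hi; rewrite add1n ltnS.
  case=> i; rewrite mem_filter mem_iota => /andP[hR /andP[i1 i2]] ->.
  apply/andP; split; first exact: hR.
  rewrite -dvdn_divisors // /f /d dvdn_mul // dvdn_exp2l //.
have ex : exists k, (k == n) || ~~ R k.+1 by exists n; rewrite eqxx.
case: (ex_minnP ex) => j hj hmin.
have jn : (j <= n)%N by apply: hmin; rewrite eqxx.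
have hpre : forall i, (0 < i <= j)%N -> R i.
  move=> [|k] // /andP[_ kj]; apply/negPn/negP => nR.
  by have := hmin k; rewrite nR orbT => /(_ isT); rewrite leqNgt kj.
have hnext : (j < n)%N -> ~~ R j.+1.
  by move=> jlt; move: hj; rewrite (ltn_eqF jlt).
exists j.
pose C := \prod_(i <- iota j.+1 (n - j) | R i) Ph (p ^ (i - j.+1) * q)%N.
exists C; split => //.
set a := (p ^ j)%N; set M := (p ^ j.+1)%N.
have hsplit : PC = (\prod_(i <- iota 1 j) Ph (p ^ i * q)%N) * (C \Po 'X^M).
  rewrite hE3 -{1}(subnKC jn) iotaD big_cat /= add1n; congr (_ * _).
    rewrite big_seq_cond [RHS]big_seq; apply: eq_bigl => i.
    case hi: (i \in iota 1 j) => //=; apply: hpre.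
    by move: hi; rewrite mem_iota add1n ltnS.
  rewrite -comp_prod big_seq_cond [RHS]big_seq_cond; apply: eq_big => // i.
  case/andP; rewrite mem_iota => /andP[i1 i2] hR.
  have i2' : (j.+2 <= i)%N.
    rewrite ltn_neqAle i1 andbT; apply/eqP => ei; rewrite -ei in hR.
    have : (j < n)%N by move: i2 jn; rewrite -ei; lia.
    by move/hnext; rewrite hR.
  rewrite /M -Ph_comp_pow ?muln_gt0 ?expn_gt0 ?prime_gt0 //; last first.
    apply: dvdn_mulr; rewrite -{1}(expn1 p); apply: dvdn_exp2l; lia.
  by congr Ph; rewrite /f mulnAC -expnD subnK // ltnW.
have nz : ('X^a - 1 : {poly algC}) != 0.
  by rewrite -size_poly_gt0 size_XnsubC // expn_gt0 prime_gt0.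
apply: (mulIf nz).
have hA := A_id j pp pq npq; rewrite -/a in hA.
have hg := geom_poly a q.
rewrite hsplit.
transitivity ((\prod_(i <- iota 1 j) Ph (p ^ i * q)%N) * ('X^a - 1) * ('X^q - 1) * (C \Po 'X^M)).
  by ring.
rewrite hA -hg; ring.
Qed.


Lemma sg_all1 (T : pred nat) : numerical_semigroup T -> T 1%N -> forall k, T k.
Proof.
move=> [T0 [Tadd _]] T1; elim=> // k IH; rewrite -addn1; exact: Tadd.
Qed.

Lemma PT_not1 (T : pred nat) (P : {poly int}) :
  numerical_semigroup T -> is_PT T P ->
  (forall m : nat, (0 < m)%N -> ~~ (P %| ('X^m - 1) ^+ 0)) -> ~~ T 1%N.
Proof.
move=> hsg hP hm; apply/negP => T1.
have P1 : P = 1.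
  have Ta := sg_all1 hsg T1.
  apply/polyP => k; rewrite hP coef1 !Ta.
  by case: k.
by have := hm 1%N isT; rewrite P1 expr0 dvdpp.
Qed.

Lemma PT_tail (T : pred nat) (P : {poly int}) :
  numerical_semigroup T -> is_PT T P -> T (size P).-1.
Proof.
move=> [T0 [Tadd [N hN]]] hP.
set K := (size P).-1.
have step : forall t, T (K + t)%N.+1 = T (K + t)%N.
  move=> t; have : P`_(K + t)%N.+1 = 0.
    by rewrite nth_default // /K; case: (size P) => //= s; rewrite ltnS leq_addr.
  rewrite hP /=; case: (T (K + t)%N.+1); case: (T (K + t)%N) => //.
have : forall t, T (K + t)%N = T K.
  by elim=> [|u IH]; rewrite ?addn0 // addnS step IH.
by move=> /(_ N) <-; apply: hN; rewrite leq_addl.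
Qed.

Lemma PT_monic (T : pred nat) (P : {poly int}) :
  numerical_semigroup T -> is_PT T P -> P \is monic.
Proof.
move=> hsg hP.
have P0 : P`_0 = 1 by rewrite hP; case: hsg => ->.
have Pn0 : P != 0 by apply/eqP => E; move: P0; rewrite E coef0.
have := PT_tail hsg hP; rewrite monicE lead_coefE hP => ->.
have : P`_(size P).-1 != 0 by rewrite -lead_coefE lead_coef_eq0.
rewrite hP PT_tail //.
by case: (_ && _).
Qed.

Lemma PT_sum (T : pred nat) (P : {poly int}) :
  is_PT T P -> forall n, \sum_(i < n.+1) P`_i = (T n)%:Z.
Proof.
move=> hP; elim=> [|n IH]; first by rewrite big_ord1 hP /= subr0.
by rewrite big_ord_recr /= IH hP /=; ring.
Qed.

Lemma PT_horner1 (T : pred nat) (P : {poly int}) :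
  numerical_semigroup T -> is_PT T P -> P.[1] = 1.
Proof.
move=> hsg hP.
have P0 : P`_0 = 1 by rewrite hP; case: hsg => ->.
have Pn0 : P != 0 by apply/eqP => E; move: P0; rewrite E coef0.
rewrite horner_coef.
under eq_bigr do rewrite expr1n mulr1.
by rewrite (polySpred Pn0) (PT_sum hP) (PT_tail hsg hP).
Qed.


Definition Vp (a q : nat) : {poly algC} := \sum_(i < q) 'X^(i * a).

Lemma coefV a q K : (0 < a)%N ->
  (Vp a q)`_K = ((a %| K)%N && (K %/ a < q)%N)%:R.
Proof.
move=> a0; rewrite /Vp; elim: q => [|q IH].
  by rewrite big_ord0 coef0 ltn0 andbF.
rewrite big_ord_recr /= coefD IH coefXn.
case: (boolP (a %| K)%N) => [aK|naK] /=; last first.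
  case: eqP => [E|_]; last by rewrite addr0.
  by move: naK; rewrite E dvdn_mull.
rewrite -(divnK aK) mulnK // eqn_pmul2r // ltnS (leq_eqVlt (K %/ a)).
by case: (ltngtP (K %/ a) q) => //= _; rewrite ?addr0 ?add0r.
Qed.

Lemma natC_eq (m n k : nat) : m%:R - n%:R = k%:R :> algC -> m = (n + k)%N.
Proof. by move/eqP; rewrite subr_eq -natrD eqr_nat addnC => /eqP. Qed.

Lemma natC_eq0 (m n : nat) : m%:R - n%:R = 0 :> algC -> m = n.
Proof. by move/eqP; rewrite subr_eq0 eqr_nat => /eqP. Qed.

Lemma coefW (C : {poly algC}) M x : (0 < M)%N ->
  (C \Po 'X^M)`_x = if (M %| x)%N then C`_(x %/ M) else 0.
Proof. exact: coef_comp_poly_Xn. Qed.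

Lemma Udiv (C : {poly algC}) a q M K : (0 < a)%N -> (0 < M)%N -> (a %| M)%N ->
  ~~ (a %| K)%N -> (Vp a q * (C \Po 'X^M))`_K = 0.
Proof.
move=> a0 M0 aM naK; rewrite coefM big1 // => i _.
rewrite coefV // coefW //.
case: (boolP (a %| i)%N) => ai /=; last by rewrite mul0r.
case: (boolP (M %| K - i)%N) => MK; last by rewrite mulr0.
exfalso; move/negP: naK; apply.
have iK : (i <= K)%N := ltn_ord i.
rewrite -(subnKC iK) dvdn_add //.
exact: dvdn_trans aM MK.
Qed.

Lemma Wzero (C : {poly algC}) M s x : (0 < M)%N ->
  (forall t, (0 < t < s)%N -> C`_t = 0) -> (0 < x < s * M)%N ->
  (C \Po 'X^M)`_x = 0.
Proof.
move=> M0 hC /andP[x0 xs]; rewrite coefW //.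
case: (boolP (M %| x)%N) => // Mx; apply: hC.
apply/andP; split; first by rewrite divn_gt0 // dvdn_leq.
by rewrite ltn_divLR.
Qed.

Lemma Ucoef (C : {poly algC}) a q M s K : (0 < M)%N -> (0 < s)%N ->
  (forall t, (0 < t < s)%N -> C`_t = 0) -> (K <= s * M)%N ->
  (Vp a q * (C \Po 'X^M))`_K =
    (Vp a q)`_K * C`_0 + (if K == (s * M)%N then (Vp a q)`_0 * C`_s else 0).
Proof.
move=> M0 s0 hC Ks; rewrite coefMr big_ord_recl /= subn0 coefW // dvdn0 div0n.
congr (_ + _).
case: eqP => [EK|NK].
  have K0 : (0 < K)%N by rewrite EK muln_gt0 s0.
  case: K EK K0 Ks => [|K] // EK _ _.
  rewrite big_ord_recr /= /bump /= !add1n subnn coefW // EK dvdn_mull // mulnK //.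
  rewrite big1 ?add0r // => i _.
  rewrite (Wzero M0 hC) ?mulr0 //= -EK !ltnS.
  exact: ltn_ord i.
rewrite big1 // => i _.
rewrite (Wzero M0 hC) ?mulr0 // /bump /= add1n.
have := ltn_ord i; lia.
Qed.


Lemma rel_ind (h c u : nat -> algC) q : (0 < q)%N ->
  (forall K, c K = h K - (if K is K'.+1 then h K' else 0)) ->
  (forall K, (if (K < q)%N then 0 else c (K - q)%N) - c K
             = (if K is K'.+1 then u K' else 0) - u K) ->
  forall K, h K - (if (q <= K)%N then h (K - q)%N else 0) = u K.
Proof.
move=> q0 hc hyp; elim=> [|K IH].
  have := hyp 0%N; rewrite q0 hc !sub0r subr0 => /oppr_inj <-.
  by rewrite leqNgt q0 subr0.
have H := hyp K.+1; rewrite [c K.+1]hc /= in H.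
have uE : u K.+1 = u K - (if (K.+1 < q)%N then 0 else c (K.+1 - q)%N) + (h K.+1 - h K).
  transitivity (u K - (u K - u K.+1)); first by ring.
  move: H; set X := (if _ then _ else _) => H.
  by rewrite -H; ring.
rewrite uE -IH; case: (leqP q K) => [qK|Kq].
  have -> : (K.+1 < q)%N = false by apply/negbTE; rewrite -leqNgt ltnW.
  have -> : (q <= K.+1)%N by apply: leqW.
  rewrite subSn // hc; ring.
case: (ltngtP K.+1 q) => [lt|gt|eq].
- by ring.
- by exfalso; move: gt Kq; rewrite ltnS => a b; have := leq_ltn_trans a b; rewrite ltnn.
- by rewrite -eq subnn hc; ring.
Qed.


Lemma rel_nat (x b y : bool) (k : nat) :
  (x : nat)%:R - (if b then (y : nat)%:R else 0) = k%:R :> algC ->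
  (x : nat) = ((b && y) + k)%N.
Proof.
case: b => /= H; first exact: natC_eq H.
by move: H; rewrite subr0 => /eqP; rewrite eqr_nat => /eqP ->.
Qed.

Lemma pre_Ta (T : pred nat) p q j (C : {poly algC}) :
  prime p -> prime q -> numerical_semigroup T ->
  (forall K, (T K : nat)%:R - (if (q <= K)%N then (T (K - q)%N : nat)%:R else 0)
       = (Vp (p ^ j) q * (C \Po 'X^(p ^ j.+1)))`_K :> algC) ->
  T (p ^ j)%N.
Proof.
move=> pp pq [T0 [Tadd _]] rel.
have p1 := prime_gt1 pp; have q1 := prime_gt1 pq.
set a := (p ^ j)%N in rel *; set M := (p ^ j.+1)%N in rel.
have a0 : (0 < a)%N by rewrite expn_gt0 prime_gt0.
have hM : M = (p * a)%N by rewrite /M expnS.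
have M0 : (0 < M)%N by rewrite hM muln_gt0 prime_gt0.
set U := Vp a q * (C \Po 'X^M) in rel.
have V0 : (Vp a q)`_0 = 1 by rewrite coefV // dvdn0 div0n prime_gt0.
have C0 : C`_0 = 1.
  have := rel 0%N; rewrite T0 leqNgt (ltnW q1) subr0 /U.
  rewrite (@Ucoef C a q M 1) ?mul1n ?muln1 //; last by move=> t /andP[t0 t1]; case: t t0 t1 => [|[]].
  by rewrite eq_sym (negbTE (lt0n_neq0 M0)) addr0 V0 mul1r.
have := rel a; rewrite /U (@Ucoef C a q M 1) ?mul1n //; last first.
- by rewrite hM leq_pmull // prime_gt0.
- by move=> t /andP[t0 t1]; case: t t0 t1 => [|[]].
rewrite hM (_ : (a == p * a)%N = false); last first.
  by apply/negbTE; rewrite neq_ltn ltn_Pmull.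
rewrite addr0 C0 mulr1 coefV // dvdnn divnn a0 q1 /= => /rel_nat.
by case: (T a); case: (_ && _).
Qed.

Lemma heart (T : pred nat) p q j (C : {poly algC}) :
  prime p -> prime q -> p != q -> (0 < j)%N -> numerical_semigroup T ->
  (forall K, (T K : nat)%:R - (if (q <= K)%N then (T (K - q)%N : nat)%:R else 0)
       = (Vp (p ^ j) q * (C \Po 'X^(p ^ j.+1)))`_K :> algC) ->
  C = 1.
Proof.
move=> pp pq npq j0 [T0 [Tadd _]] rel.
have p1 := prime_gt1 pp; have q1 := prime_gt1 pq.
set a := (p ^ j)%N in rel; set M := (p ^ j.+1)%N in rel.
have a0 : (0 < a)%N by rewrite expn_gt0 prime_gt0.
have hM : M = (p * a)%N by rewrite /M expnS.
have M0 : (0 < M)%N by rewrite hM muln_gt0 prime_gt0.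
have aM : (a %| M)%N by rewrite hM dvdn_mull.
have pa : (p %| a)%N by rewrite /a -(prednK j0) expnS dvdn_mulr.
have cop : coprime a q.
  by rewrite /a coprimeXl // prime_coprime // dvdn_prime2 // (negbTE npq).
have anq : ~~ (a %| q)%N.
  apply/negP => aq; have : (p %| q)%N by apply: dvdn_trans pa aq.
  by rewrite dvdn_prime2 // (negbTE npq).
set U := Vp a q * (C \Po 'X^M) in rel.
have V0 : (Vp a q)`_0 = 1 by rewrite coefV // dvdn0 div0n prime_gt0.
have C0 : C`_0 = 1.
  have := rel 0%N; rewrite T0 leqNgt (ltnW q1) subr0 /U.
  rewrite (@Ucoef C a q M 1) ?mul1n ?muln1 //; last by move=> t /andP[t0 t1]; case: t t0 t1 => [|[]].
  by rewrite eq_sym (negbTE (lt0n_neq0 M0)) addr0 V0 mul1r.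
have Ta : T a.
  have := rel a; rewrite /U (@Ucoef C a q M 1) ?mul1n //; last first.
  - by rewrite hM leq_pmull // prime_gt0.
  - by move=> t /andP[t0 t1]; case: t t0 t1 => [|[]].
  rewrite hM (_ : (a == p * a)%N = false); last first.
    by apply/negbTE; rewrite neq_ltn ltn_Pmull.
  rewrite addr0 C0 mulr1 coefV // dvdnn divnn a0 q1 /= => /rel_nat.
  by case: (T a); case: (_ && _).
have Tq : T q.
  have := rel q; rewrite /U Udiv // leqnn subnn T0 => /eqP; rewrite subr_eq0.
  by rewrite eqr_nat; case: (T q).
have gen : forall x y, T (x * a + y * q)%N.
  have Tm : forall x b, T b -> T (x * b)%N.
    by move=> x b Tb; elim: x => [|x IH]; rewrite ?mul0n // mulSn; apply: Tadd.
  by move=> x y; apply: Tadd; apply: Tm.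
have main : forall s, (0 < s)%N -> C`_s = 0.
  elim/ltn_ind => s IH s0.
  have hC : forall t, (0 < t < s)%N -> C`_t = 0.
    by move=> t /andP[t0 ts]; apply: IH.
  have := rel (s * M)%N.
  rewrite /U (@Ucoef C a q M s) ?eqxx ?leqnn // V0 C0 mulr1 mul1r.
  have KE : (s * M = (s * p) * a)%N by rewrite hM mulnA.
  rewrite coefV // KE dvdn_mull // mulnK //.
  have -> : T (s * p * a)%N by have := gen (s * p)%N 0%N; rewrite mul0n addn0.
  case: (ltnP (s * p) q) => spq /=.
    have Tf : (q <= s * p * a)%N -> T (s * p * a - q)%N = false.
      move=> qK.
      suff desc : forall x l, (0 < l)%N -> (x + l * q)%N = (s * p * a)%N -> T x = false.
        by apply: (desc _ 1%N) => //; rewrite mul1n subnK.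
      elim/ltn_ind => x IHx l l0 E.
      have nax : ~~ (a %| x)%N.
        apply/negP => ax.
        have : (a %| l * q)%N by rewrite -(dvdn_addr _ ax) E dvdn_mull.
        rewrite Gauss_dvdl // => al; have := dvdn_leq l0 al => la.
        have : (a * q <= l * q)%N by rewrite leq_mul2r la orbT.
        have : (s * p * a < q * a)%N by rewrite ltn_mul2r a0.
        nia.
      have := rel x; rewrite /U Udiv //.
      case: (leqP q x) => qx.
        rewrite (IHx (x - q)%N _ l.+1) //.
          by rewrite subr0 => /eqP; rewrite pnatr_eq0; case: (T x).
        by rewrite -subn_gt0 subKn ?prime_gt0 // ltnW.
        by rewrite mulSn addnA subnK.
      by rewrite subr0 => /eqP; rewrite pnatr_eq0; case: (T x).
    case: (leqP q (s * p * a)) => qK.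
      rewrite Tf // => H; apply: (@addrI _ 1); rewrite addr0 -H /=.
      by rewrite ?mulr0n ?subr0.
    move=> H; apply: (@addrI _ 1); rewrite addr0 -H /=.
    by rewrite ?mulr0n ?subr0.
  have qK : (q <= s * p * a)%N by apply: (leq_trans spq); rewrite leq_pmulr.
  rewrite qK.
  have -> : T (s * p * a - q)%N.
    have E : (s * p * a - q = (s * p - q) * a + (a - 1) * q)%N.
      rewrite mulnBl mulnBl mul1n; nia.
    by rewrite E gen.
  move=> H; apply: (@addrI _ 0); rewrite addr0 -H /=.
  by rewrite ?mulr1n subrr.
apply/polyP => k; rewrite coef1; case: k => [|k]; first by rewrite C0.
exact: main.
Qed.

Lemma coef_PC (T : pred nat) (P : {poly int}) K : is_PT T P ->
  (pZtoC P)`_K = (T K : nat)%:R - (if K is K'.+1 then (T K' : nat)%:R else 0) :> algC.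
Proof.
move=> hP; rewrite coef_map hP /= intrB.
by case: K => [|K] /=; rewrite ?subr0.
Qed.

Lemma rel_from (T : pred nat) (P : {poly int}) q (U : {poly algC}) :
  (0 < q)%N -> is_PT T P -> pZtoC P * ('X^q - 1) = ('X - 1) * U ->
  forall K, (T K : nat)%:R - (if (q <= K)%N then (T (K - q)%N : nat)%:R else 0) = U`_K.
Proof.
move=> q0 hP hid.
apply: (@rel_ind (fun k => (T k : nat)%:R) (fun k => (pZtoC P)`_k) (fun k => U`_k) q q0).
  by move=> K; exact: coef_PC.
move=> K; have := congr1 (fun r : {poly algC} => r`_K) hid.
rewrite /= mulrBr mulr1 mulrBl mul1r !coefB coefMXn coefXM => ->.
by case: K.
Qed.


Lemma dvd_from (P : {poly int}) a q : (0 < a)%N ->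
  pZtoC P * ('X^q - 1) = ('X - 1) * Vp a q -> P %| 'X^(a * q) - 1.
Proof.
move=> a0 hid.
  pose Y : {poly int} := ('X^a - 1) * \sum_(i < q) 'X^i.
  have nz : ('X - 1 : {poly algC}) != 0 by rewrite -(polyC1) polyXsubC_eq0.
  have E : P * Y = 'X^(a * q) - 1.
    apply: (@map_inj_poly _ _ (intr : int -> algC)); first exact: intr_inj.
      by rewrite rmorph0.
    rewrite pZtoC_XnB1 /Y !rmorphM rmorphB rmorph1 /= map_polyXn rmorph_sum /=.
    apply: (mulfI nz).
    have g1 : ('X - 1) * \sum_(i < q) 'X^i = 'X^q - 1 :> {poly algC}.
      have := geom_poly 1 q; rewrite mul1n expr1 => <-; congr (_ * _).
      by apply: eq_bigr => i _; rewrite muln1.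
    under eq_bigr do rewrite map_polyXn.
    have g2 := geom_poly a q.
    transitivity (pZtoC P * ('X^q - 1) * ('X^a - 1)).
      by rewrite -g1; ring.
    by rewrite hid -g2 /Vp; ring.
  by rewrite -E dvdp_mulIl.
Qed.

Close Scope ring_scope.

Theorem theorem3 (p q n : nat) (T : pred nat) :
  prime p -> prime q -> p != q -> (0 < n)%N ->
  numerical_semigroup T ->
  cyclotomic_depth_height T (p ^ n * q) 1 ->
  forall t : nat, T t <-> in_gen2 (p ^ n) q t.
Proof.
move=> pp pq npq n0 hsg [_ [_ [P [hP [hdvd [hm hmin]]]]]].
rewrite expr1 in hdvd.
have T1 := PT_not1 hsg hP hm.
have mP := PT_monic hsg hP.
have P1 := PT_horner1 hsg hP.
have p1 := prime_gt1 pp; have q1 := prime_gt1 pq.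
have q0 : (0 < q)%N by rewrite prime_gt0.
have [j [C [jn hid]]] := decomp pp pq npq n0 mP P1 hdvd.
have rel := rel_from q0 hP hid.
have Ta := pre_Ta pp pq hsg rel.
have j0 : (0 < j)%N.
  by case: j {jn hid rel} Ta => // Ta; rewrite expn0 (negbTE T1) in Ta.
have C1 := heart pp pq npq j0 hsg rel.
rewrite C1 -polyC1 comp_polyC polyC1 mulr1 in hid rel.
set a := (p ^ j)%N in hid rel Ta.
have a0 : (0 < a)%N by rewrite expn_gt0 prime_gt0.
have jE : j = n.
  apply/eqP; rewrite eqn_leq jn /=; rewrite leqNgt; apply/negP => jlt.
  have := hmin (p ^ j * q)%N.
  rewrite muln_gt0 expn_gt0 !prime_gt0 // dvdn_mul ?dvdn_exp2l // ?ltn_pmul2r ?prime_gt0 //.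
  rewrite ltn_exp2l // jlt /= => /(_ isT isT isT); rewrite GRing.expr1.
  apply/negP/negPn.
  exact: (dvd_from a0 hid).
subst j.
have anq : ~~ (a %| q).
  apply/negP => aq; have : (p %| q) by apply: dvdn_trans aq; rewrite /a -(prednK n0) expnS dvdn_mulr.
  by rewrite dvdn_prime2 // (negbTE npq).
case: hsg => [T0 [Tadd _]].
have Tq : T q.
  have := rel q; rewrite coefV // (negbTE anq) /= leqnn subnn T0 => /eqP.
  by rewrite GRing.subr_eq0 eqr_nat; case: (T q).
have gen : forall x y, T (x * a + y * q).
  have Tm : forall x b, T b -> T (x * b).
    by move=> x b Tb; elim: x => [|x IH]; rewrite ?mul0n // mulSn; apply: Tadd.
  by move=> x y; apply: Tadd; apply: Tm.
move=> t; split; last by case=> x [y ->]; apply: gen.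
elim/ltn_ind: t => t IH Tt.
case: (boolP ((q <= t) && T (t - q))) => [/andP[qt Ttq]|hn].
  have ltq : t - q < t by rewrite ltn_subrL q0 (leq_trans q0 qt).
  have [x [y E]] := IH (t - q) ltq Ttq.
  by exists x, y.+1; rewrite mulSn addnCA -E subnKC.
have := rel t; rewrite coefV // Tt.
have -> : (if (q <= t)%N then (T (t - q)%N : nat)%:R else 0)%R = 0%R :> algC.
  by move: hn; case: (q <= t) => //= /negbTE ->.
rewrite GRing.subr0 => /eqP; rewrite eqr_nat.
case: (boolP (a %| t)) => [at_|] //= _.
by exists (t %/ a), 0; rewrite mul0n addn0 divnK.
Qed.
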